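(* Let $m\ge 2$, $p$ a prime, and let $G=G_1\circ G_2\circ\dots\circ G_m$ be a finite group which is a central product of pairwise isomorphic extra-special subgroups $G_i$ of order $p^3$. Suppose $G$ admits an automorphism $\alpha$ of order $m$, with $m$ coprime to $p$, which cyclically permutes the factors $G_1,\dots,G_m$ and satisfies $G'\le C_G(\alpha)$. Then $[G,\alpha]$ is extra-special and has index $p^2$ in $G$.
   Context: A finite $p$-group $P$ is extra-special if $P'=Z(P)$ has order $p$. A group $G$ is a central product $H\circ K$ of subgroups $H,K$ if $G=\langle H,K\rangle$, $[H,K]=1$ and $H\cap K=Z(H)=Z(K)$; iterated central products are defined accordingly. $C_G(\alpha)$ is the fixed-point subgroup of $\alpha$, and $[G,\alpha]$ is the subgroup generated by all $g^{-1}g^{\alpha}$, $g\in G$. *)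

(* Defs.v *)
From HB Require Import structures.
From mathcomp Require Import all_boot all_fingroup all_solvable.
Set Implicit Arguments. Unset Strict Implicit. Unset Printing Implicit Defensive.
Local Open Scope group_scope.

Section Defs.
Variable gT : finGroupType.

Definition extraspecial_p (p : nat) (P : {set gT}) : bool :=
  [&& p.-group P, P^`(1) == 'Z(P) & #|'Z(P)| == p].

Definition central_prod_paper (H K G : {set gT}) : bool :=
  [&& G == H <*> K, K \subset 'C(H), H :&: K == 'Z(H) & 'Z(H) == 'Z(K)].

Definition prefix_gen (Gs : nat -> {group gT}) (k : nat) : {set gT} :=
  <<\bigcup_(i < k) Gs i>>.

Definition iter_central_prod (Gs : nat -> {group gT}) (m : nat) (G : {set gT}) : Prop :=
  (forall k, 0 < k < m -> central_prod_paper (prefix_gen Gs k) (Gs k) (prefix_gen Gs k.+1))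
  /\ G = prefix_gen Gs m.

Definition fixed_sub (G : {set gT}) (a : {perm gT}) : {set gT} :=
  [set x in G | a x == x].

Definition comm_aut (G : {set gT}) (a : {perm gT}) : {set gT} :=
  <<[set x^-1 * a x | x in G]>>.

End Defs.

(* Main.v *)
Require Import Defs.
From HB Require Import structures.
From mathcomp Require Import all_boot all_fingroup all_solvable.
Local Open Scope group_scope.

Theorem lemma2p5 (gT : finGroupType) (m p : nat) (G : {group gT})
    (Gs : nat -> {group gT}) (a : {perm gT}) :
  2 <= m -> prime p ->
  (forall i, i < m -> extraspecial_p p (Gs i) /\ #|Gs i| = (p ^ 3)%N) ->
  (forall i j, i < m -> j < m -> Gs i \isog Gs j) ->
  iter_central_prod Gs m G ->
  a \in Aut G -> #[a] = m -> coprime m p ->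
  (forall i, i < m -> a @: Gs i = Gs (i.+1 %% m)) ->
  G^`(1) \subset fixed_sub G a ->
  extraspecial_p p (comm_aut G a) /\ #|G : comm_aut G a| = (p ^ 2)%N.
Proof.
move=> m2 pr_p hes _ [hcp defG] AutGa oa cop_mp ha sG'fix.
set Z0 := 'Z(Gs 0).
pose P k := (<<\bigcup_(i < k) Gs i>>)%G.
have defP k : prefix_gen Gs k = P k by [].
have P1 : P 1%N = Gs 0.
  by apply/val_inj; rewrite /= big_ord1 genGid.
have es0 := hes 0%N (ltnW m2).
case: es0 => /and3P[pG0 /eqP G0'Z /eqP oZ0] oG0.
have IND : forall k, 0 < k <= m ->
   [/\ p.-group (P k), 'Z(P k) = Z0 & (P k)^`(1) \subset Z0].
  elim=> [|k IHk] //; case: k IHk => [|k] IHk /andP[_ lekm].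
    by rewrite P1 G0'Z.
  have [pPk ZPk P'k] := IHk (ltnW lekm).
  have /and4P[/eqP defPk cPk _ /eqP ZZ] := hcp k.+1 lekm.
  rewrite !defP in defPk cPk ZZ.
  have cp : P k.+1 \* Gs k.+1 = P k.+2 by rewrite cprodEY // -defPk.
  have [_ defZ _] := cprodP (center_cprod cp).
  have [_ defD _] := cprodP (der_cprod 1 cp).
  have [_ defM _] := cprodP cp.
  have [/and3P[pGk /eqP Gk'Z _] _] := hes k.+1 lekm.
  split.
  - by rewrite -defM pgroupM pPk.
  - by rewrite -defZ -ZZ ZPk mulGid.
  - rewrite -defD Gk'Z -ZZ ZPk.
    by rewrite mul_subG.

have lt0m : 0 < m := ltnW m2.
have [pG ZG G'Z] := IND m (introT andP (conj lt0m (leqnn m))).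
have eGP : G :=: P m by rewrite defG.
rewrite -eGP in pG ZG G'Z.
have sGsG i : i < m -> Gs i \subset G.
  by move=> lim; rewrite eGP sub_gen //; exact: (bigcup_sup (Ordinal lim)).
have cGs i j : i < j -> j < m -> Gs j \subset 'C(Gs i).
  move=> lij ljm; have := hcp j; rewrite (leq_ltn_trans (leq0n i) lij) ljm.
  case/(_ isT)/and4P=> _ cPj _ _; apply: subset_trans cPj (centS _).
  by rewrite defP sub_gen //; exact: (bigcup_sup (Ordinal lij)).
have ZGs i : i < m -> 'Z(Gs i) = Z0.
  case: i => [|i] // lim; have := hcp i.+1; rewrite lim.
  case/(_ isT)/and4P=> _ _ _ /eqP <-; rewrite defP.
  by have [] := IND i.+1 (ltnW lim).
have [n Dm] : exists n, m = n.+1 by exists m.-1; rewrite prednK.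
move: oa; subst m => oa.
have n1 : 0 < n := m2.
have [_ oK] := hes n (ltnSn n).
have ZK := ZGs n (ltnSn n).
set K := Gs n in oK ZK.
have aG x : x \in G -> a x \in G by apply: Aut_closed.
have aM : {in G &, {morph a : x y / x * y}}.
  by move=> x y Gx Gy; rewrite -(autmE AutGa) morphM.
have afix z : z \in G^`(1) -> a z = z.
  by move/(subsetP sG'fix); rewrite inE => /andP[_ /eqP].
have am : a ^+ n.+1 = 1 by rewrite -oa expg_order.
have iterG k x : x \in G -> iter k a x \in G.
  by elim: k => // k IH Gx; rewrite iterS aG ?IH.
have iterm y : iter n.+1 a y = y by rewrite -permX am perm1.
have iterK y : y \in K -> forall i, i < n -> iter i.+1 a y \in Gs i.
  move=> Ky; elim=> [|i IH] lt.
    have := ha n (ltnSn n); rewrite modnn => <-; exact: imset_f.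
  rewrite iterS; have := ha i (ltnW (ltnW lt)); rewrite modn_small ?ltnS 1?ltnW // => <-.
  by apply: imset_f; apply: IH; apply: ltnW.

pose H := <<[set (x^-1 * a x)%g | x : gT in G]>>%G.
have -> : comm_aut G a = H by [].
have fH x : x \in G -> x^-1 * a x \in H.
  by move=> Gx; apply: mem_gen; apply/imsetP; exists x.
have sHG : H \subset G.
  rewrite gen_subG; apply/subsetP => _ /imsetP[x Gx ->].
  by rewrite groupM ?groupV ?aG.
have nHG : G \subset 'N(H).
  apply/subsetP => h Gh; rewrite inE -genJ gen_subG.
  apply/subsetP => _ /imsetP[_ /imsetP[x Gx ->] ->].
  have -> : (x^-1 * a x) ^ h = (x * h)^-1 * a (x * h) * (h^-1 * a h)^-1.
    by rewrite aM // conjgE !invMg !invgK !mulgA mulgK.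
  by rewrite groupM ?groupV ?fH ?groupM.
have cfix c : c \in G -> a c = c -> H \subset 'C[c].
  move=> Gc ac; rewrite gen_subG; apply/subsetP => _ /imsetP[g Gg ->].
  apply/cent1P.
  set z := [~ g, c].
  have G'z : z \in G^`(1) by rewrite derg1 mem_commg.
  have Zz : z \in 'Z(G) by rewrite ZG (subsetP G'Z).
  have az : [~ a g, c] = z.
    rewrite -{1}ac -(autmE AutGa) -morphR //= autmE afix //.
  apply/commgP/conjg_fixP.
  rewrite conjMg conjVg !conjg_mulR az invMg.
  have cz : commute (g^-1 * a g) z.
    move/setIP: Zz => [_ /centP cZ]; apply: commute_sym; apply: cZ.
    by rewrite groupM ?groupV ?aG.
  have e : g^-1 * (a g * z) = z * (g^-1 * a g) by rewrite mulgA cz.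
  by rewrite -/z -mulgA e mulKg.

have sKG : K \subset G := sGsG n (ltnSn n).
have HKg : H <*> K = H * K := norm_joinEr (subset_trans sKG nHG).
have sHKG : H <*> K \subset G by rewrite join_subG sHG.
have aHK y : y \in H <*> K -> a y \in H <*> K.
  move=> HKy; have Gy := subsetP sHKG y HKy.
  have -> : a y = y * (y^-1 * a y) by rewrite mulKVg.
  by rewrite groupM // mem_gen // inE fH.
have sGsHK i : i < n.+1 -> Gs i \subset H <*> K.
  elim: i => [|i IH] lt.
    have := ha n (ltnSn n); rewrite modnn => <-.
    apply/subsetP => _ /imsetP[y Ky ->]; apply: aHK.
    by apply: mem_gen; rewrite inE Ky orbT.
  have := ha i (ltnW lt); rewrite modn_small // => <-.
  apply/subsetP => _ /imsetP[y Gy ->]; apply: aHK.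
  exact: (subsetP (IH (ltnW lt))).
have eG : G :=: H * K.
  apply/eqP; rewrite -HKg eqEsubset sHKG andbT eGP gen_subG.
  by apply/bigcupsP => i _; apply: sGsHK.
have Dfix y : y \in K ->
    a (\prod_(i < n.+1) iter i a y) = \prod_(i < n.+1) iter i a y.
  move=> Ky; have Gy := subsetP sKG y Ky.
  have aP k : a (\prod_(i < k) iter i a y) = \prod_(i < k) iter i.+1 a y.
    elim: k => [|k IH]; first by rewrite !big_ord0 -(autmE AutGa) morph1.
    rewrite !big_ord_recr /= aM ?IH //; last by rewrite iterG.
    by apply: group_prod => i _; rewrite iterG.
  rewrite aP.
  rewrite big_ord_recr /= -iterS iterm big_ord_recl /=.
  have : \prod_(i < n) a (iter i a y) \in 'C[y].
    apply: group_prod => i _; apply/cent1P.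
    have /centP := subsetP (cGs i n (ltn_ord i) (ltnSn n)) y Ky.
    by move/(_ _ (iterK y Ky i (ltn_ord i))) => /commute_sym.
  by move/cent1P.
have Q y k : y \in G -> y^-1 * iter k a y \in H.
  move=> Gy; elim: k => [|k IH]; first by rewrite /= mulVg group1.
  have -> : y^-1 * iter k.+1 a y
      = (y^-1 * iter k a y) * ((iter k a y)^-1 * a (iter k a y)).
    by rewrite iterS mulgA mulgK.
  by rewrite groupM ?fH ?iterG.
have D2 y k : y \in G -> (y ^+ k)^-1 * \prod_(i < k) iter i a y \in H.
  move=> Gy; elim: k => [|k IH].
    by rewrite big_ord0 expg0 invg1 mulg1 group1.
  rewrite big_ord_recr /= expgSr invMg.
  have -> : y^-1 * (y ^+ k)^-1 * (\prod_(i < k) iter i a y * iter k a y)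
     = ((y ^+ k)^-1 * \prod_(i < k) iter i a y) ^ y * (y^-1 * iter k a y).
    by rewrite conjgE !mulgA mulgK.
  by rewrite groupM ?Q // memJ_norm // (subsetP nHG).

have ZHZ : 'Z(H) \subset Z0.
  apply/subsetP => x /setIP[Hx cHx].
  have cKx : K \subset 'C[x].
    apply/subsetP => y Ky; have Gy := subsetP sKG y Ky.
    set d := \prod_(i < n.+1) iter i a y.
    have Gd : d \in G by apply: group_prod => i _; rewrite iterG.
    have h := D2 y n.+1 Gy.
    have eym : y ^+ n.+1 = d * ((y ^+ n.+1)^-1 * d)^-1.
      by rewrite invMg invgK mulKVg.
    have cxym : commute x (y ^+ n.+1).
      rewrite eym; apply: commuteM.
        by apply/cent1P; apply: (subsetP (cfix d Gd (Dfix y Ky))).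
      by move/centP: cHx => cH; apply: cH; rewrite groupV.
    have coK : coprime #|K| n.+1 by rewrite oK coprimeXl // coprime_sym.
    rewrite -(expgK coK Ky); apply/cent1P; apply/commute_sym.
    exact: commuteX.
  have cGx : x \in 'C(G) by rewrite eG -HKg centY inE cHx -sub_cent1.
  by rewrite -ZG; apply/setIP; split; [apply: (subsetP sHG) | ].
have HKZ : H :&: K \subset Z0.
  apply/subsetP => x /setIP[Hx Kx]; rewrite -ZK; apply/setIP; split => //.
  apply/centP => y Ky; have Gy := subsetP sKG y Ky.
  set e := \prod_(i < n) a (iter i a y).
  have de : \prod_(i < n.+1) iter i a y = y * e by rewrite big_ord_recl.
  have ce : commute x e.
    have : e \in 'C(K).
      apply: group_prod => i _.
      have := cGs i n (ltn_ord i) (ltnSn n); rewrite centsC => /subsetP; apply.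
      exact: (iterK y Ky i (ltn_ord i)).
    by move/centP => /(_ x Kx) /commute_sym.
  have cd : commute x (y * e).
    rewrite -de; apply/cent1P; apply: (subsetP (cfix _ _ (Dfix y Ky))) => //.
    by apply: group_prod => i _; rewrite iterG.
  apply: (mulIg e).
  by rewrite -mulgA cd -mulgA -ce mulgA.

have ntH : H :!=: 1.
  apply/eqP => H1.
  have a1 : a = 1.
    apply/permP => x; rewrite perm1.
    case Gx: (x \in G); last by rewrite (out_Aut AutGa) ?Gx.
    have := fH x Gx; rewrite H1 inE => /eqP e.
    by rewrite -(mulKVg x (a x)) e mulg1.
  by move: oa n1; rewrite a1 order1 => -[<-].
have nsHG : H <| G by rewrite /normal sHG nHG.
have prZ : prime #|Z0| by rewrite oZ0.
have sZH : Z0 \subset H.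
  have := meet_center_nil (pgroup_nil pG) nsHG ntH; rewrite ZG.
  case: (boolP (Z0 \subset H)) => // nZH.
  by rewrite setIC prime_TIg // eqxx.
have eHK : H :&: K = Z0.
  by apply/eqP; rewrite eqEsubset HKZ subsetI sZH -ZK center_sub.
have cardG : (#|G| * p = #|H| * p ^ 3)%N.
  by rewrite eG -oK mul_cardG eHK oZ0.
have p0 : 0 < p := prime_gt0 pr_p.
have idx : #|G : H| = (p ^ 2)%N.
  apply/eqP; move: cardG; rewrite -(Lagrange sHG) expnSr mulnA -mulnA.
  by rewrite -mulnA => /eqP; rewrite eqn_pmul2l ?cardG_gt0 // eqn_pmul2r.
have sH'Z : H^`(1) \subset Z0 by apply: subset_trans G'Z; apply: dergS.
have H'Z : H^`(1) = Z0.
  apply/eqP; rewrite eqEsubset sH'Z /=.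
  case: (boolP (Z0 \subset H^`(1))) => // nZ; exfalso.
  have H'1 : H^`(1) = 1.
    by have := prime_TIg prZ nZ; rewrite (setIidPr sH'Z).
  have abH : abelian H by apply/derG1P.
  have sHZ : H \subset Z0 by rewrite -(center_idP abH).
  have leG : (#|G| <= p ^ 3)%N.
    rewrite -(Lagrange sHG) idx (expnS p 2) leq_pmul2r ?expn_gt0 ?p0 //.
    by rewrite -oZ0 subset_leq_card.
  have GK : K :=: G.
    by apply/eqP; rewrite eqEcard sKG oK leG.
  have sG0Z : Gs 0 \subset Z0.
    rewrite -ZK subsetI GK sGsG //=.
    have := cGs 0%N n n1 (ltnSn n); rewrite centsC.
    by rewrite -GK.
  have := subset_leq_card sG0Z; rewrite oG0 oZ0 -{2}(expn1 p) leq_exp2l //.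
  exact: prime_gt1.
have ZH : 'Z(H) = Z0.
  apply/eqP; rewrite eqEsubset ZHZ subsetI sZH /=.
  rewrite -ZG; apply: subset_trans (subsetIr _ _) (centS sHG).
split=> //.
by rewrite /extraspecial_p (pgroupS sHG pG) H'Z ZH oZ0 !eqxx.
Qed.
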